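(* Let $G$ be a finitely generated group, $(X,\mathcal{U})$ a first countable, locally compact, paracompact, Hausdorff uniform space, and $\Phi\in Act(G,X)$ an action with a proper expansive entourage $A$. For a non-empty finite set $F\subset G$ let $V_F(A)=\{(x,y)\in X\times X: (\Phi_g(x),\Phi_g(y))\in A \text{ for all } g\in F\}$. Then for any wide $U\in\mathcal{U}$ there exists a non-empty finite set $F\subset G$ with $V_F(A)\subset U$.
   Context: $X$ carries the topology induced by $\mathcal{U}$. $Act(G,X)$: maps $\Phi:G\times X\to X$ with each $\Phi_g$ a uniform equivalence, $\Phi_e=\mathrm{id}$, $\Phi_{g_1g_2}=\Phi_{g_1}\circ\Phi_{g_2}$. A closed entourage $A$ is an expansive entourage for $\Phi$ if for any distinct $x,y$ there is $g\in G$ with $(\Phi_g(x),\Phi_g(y))\notin A$. An entourage $M$ is proper if for every compact $K\subset X$ the set $M[K]=\bigcup_{x\in K}\{y:(x,y)\in M\}$ is compact. An entourage $U$ is wide if there is a compact $K\subset X$ with $U\cup(K\times X)=X\times X$. *)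

(* Defs.v *)
From HB Require Import structures.
From mathcomp Require Import all_boot monoid.
From mathcomp Require Import all_classical all_reals all_analysis.
Set Implicit Arguments. Unset Strict Implicit. Unset Printing Implicit Defensive.
Local Open Scope classical_set_scope.

Definition finitely_generated (G : groupType) : Prop :=
  exists S : set G, finite_set S /\
    forall H : set G, S `<=` H -> H (@monoid.one G) ->
      (forall x y, H x -> H y -> H (@monoid.mul G x y)) ->
      (forall x, H x -> H (@monoid.inv G x)) -> H = setT.

Definition first_countable (T : topologicalType) : Prop :=
  forall x : T, exists B : nat -> set T,
    (forall n, nbhs x (B n)) /\ (forall N, nbhs x N -> exists n, B n `<=` N).

Definition paracompact (T : topologicalType) : Prop :=
  forall (I : Type) (C : I -> set T), (forall i, open (C i)) ->
    \bigcup_i C i = setT ->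
    exists (J : Type) (D : J -> set T),
      [/\ (forall j, open (D j)), \bigcup_j D j = setT,
          (forall j, exists i, D j `<=` C i) &
          (forall x : T, exists N : set T, nbhs x N /\ finite_set [set j | D j `&` N !=set0])].

Definition unif_equiv (X : uniformType) (f : X -> X) : Prop :=
  exists g : X -> X, [/\ cancel f g, cancel g f,
                         unif_continuous f & unif_continuous g].

Definition is_action (G : groupType) (X : uniformType) (Phi : G -> X -> X) : Prop :=
  [/\ (forall g, unif_equiv (Phi g)),
      Phi (@monoid.one G) = id &
      (forall g1 g2, Phi (@monoid.mul G g1 g2) = Phi g1 \o Phi g2)].

Definition expansive_entourage (G : groupType) (X : uniformType)
    (Phi : G -> X -> X) (A : set (X * X)) : Prop :=
  [/\ entourage A, closed A &
      forall x y : X, x <> y -> exists g : G, ~ A (Phi g x, Phi g y)].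

Definition ent_image (X : Type) (M : set (X * X)) (K : set X) : set X :=
  [set y | exists2 x, K x & M (x, y)].

Definition proper_entourage (X : uniformType) (M : set (X * X)) : Prop :=
  entourage M /\ forall K : set X, compact K -> compact (ent_image M K).

Definition wide_entourage (X : uniformType) (U : set (X * X)) : Prop :=
  entourage U /\ exists K : set X, compact K /\ U `|` (K `*` setT) = setT.

Definition VF (G : groupType) (X : Type) (Phi : G -> X -> X)
    (F : set G) (A : set (X * X)) : set (X * X) :=
  [set xy | forall g, F g -> A (Phi g xy.1, Phi g xy.2)].

(* Main.v *)
Require Import Defs.
From HB Require Import structures.
From mathcomp Require Import all_boot monoid.
From mathcomp Require Import all_classical all_reals all_analysis.
From mathcomp Require Import finmap.
Local Open Scope classical_set_scope.

Definition ptT (T : topologicalType) (x0 : T) : Type := T.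
HB.instance Definition _ (T : topologicalType) (x0 : T) := Topological.copy (@ptT T x0) T.
HB.instance Definition _ (T : topologicalType) (x0 : T) := isPointed.Build (@ptT T x0) x0.
Lemma compact_cover_np (T : topologicalType) (x0 : T) (A : set T) :
  compact A -> cover_compact A.
Proof.
move=> cA. have := @compact_cover (@ptT T x0). move=> E.
have : @compact (@ptT T x0) A by exact: cA.
by rewrite E.
Qed.

Lemma uc_cont (X : uniformType) (f : X -> X) : unif_continuous f -> continuous f.
Proof.
move=> uf x P /nbhsP [E entE sEP].
have entD := uf E entE.
apply/nbhsP; exists ((fun xy : X * X => (f xy.1, f xy.2)) @^-1` E) => // y /xsectionP Dxy; apply: sEP.
by apply/xsectionP; exact: Dxy.
Qed.

Lemma pair_cont (X : uniformType) (f : X -> X) : continuous f ->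
  continuous (fun p : X * X => (f p.1, f p.2)).
Proof.
move=> cf p Q [[Q1 Q2] /= [N1 N2] sQ].
exists (f @^-1` Q1, f @^-1` Q2); first by split; [exact: cf|exact: cf].
by case=> a b [/= ? ?]; apply: (sQ (f a, f b)).
Qed.

Lemma diag_int (X : uniformType) (U : set (X * X)) (x : X) :
  entourage U -> U° (x, x).
Proof.
move=> eU; rewrite /interior.
set V := split_ent U.
have eV : entourage V by exact: entourage_split_ent.
have eVi : entourage [set p : X * X | V (p.2, p.1)] by exact: (entourage_inv eV).
exists (xsection [set p : X * X | V (p.2, p.1)] x, xsection V x); first split.
- exact: nbhs_entourage eVi.
- exact: nbhs_entourage.
case=> a b [/xsectionP /= H1 /xsectionP H2].
exact: (@entourage_split X x a b U eU H1 H2).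
Qed.

Theorem lemma3p5 (G : groupType) (X : uniformType) (Phi : G -> X -> X)
    (A : set (X * X)) :
  finitely_generated G ->
  first_countable X -> locally_compact [set: X] -> paracompact X ->
  hausdorff_space X ->
  is_action Phi ->
  expansive_entourage Phi A -> proper_entourage A ->
  forall U : set (X * X), wide_entourage U ->
  exists F : set G, [/\ finite_set F, F !=set0 & VF Phi F A `<=` U].
Proof.
move=> _ _ _ _ _ [ueq Phi1 _] [eA clA expA] [_ prA] U [eU [K [cK wK]]].
pose W (g : G) : set (X * X) :=
  (fun p : X * X => (Phi g p.1, Phi g p.2)) @^-1` (~` A).
have oW : forall g, open (W g).
  move=> g; apply: open_comp; last exact: closed_openC.
  move=> p _; apply: pair_cont; apply: uc_cont.
  by case: (ueq g) => h [].
pose D : set (set (X * X)) := [set Z | Z = U° \/ exists g, Z = W g].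
have cKA : compact (K `*` ent_image A K) by apply: compact_setX => //; exact: prA.
have [[x0 _]|nX] := pselect (exists x : X, True); last first.
  exists [set @monoid.one G]; split; [exact: finite_set1|by exists (@monoid.one G)|].
  by case=> x y; exfalso; apply: nX; exists x.
have cc : cover_compact (K `*` ent_image A K) by apply: (@compact_cover_np _ (x0, x0)); exact: cKA.
have := cc _ D id.
case.
- by move=> Z [->|[g ->]]; [exact: open_interior|exact: oW].
- case=> x y [/= Kx Ay].
  have [->|nxy] := pselect (x = y).
    by exists U° => //; [left|exact: diag_int].
  have [g ng] := expA x y nxy.
  by exists (W g) => //; right; exists g.
move=> D' sD' cov.
have [c hc] : {c : set (X * X) -> G & forall Z, (exists g', Z = W g') -> Z = W (c Z)}.
  apply: (@choice _ _ (fun (Z : set (X * X)) (g : G) =>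
    (exists g', Z = W g') -> Z = W g)).
  move=> Z; have [[g' ->]|nZ] := pselect (exists g', Z = W g').
    by exists g'.
  by exists (@monoid.one G) => /nZ.
exists ([set @monoid.one G] `|` (c @` [set Z : set (X * X) | Z \in D'])); split.
- rewrite finite_setU; split; first exact: finite_set1.
  apply: finite_image; exact: finite_fset.
- by exists (@monoid.one G); left.
case=> x y VFxy.
have : (U `|` K `*` setT) (x, y) by rewrite wK.
case=> [//|[/= Kx _]].
have Axy : A (x, y).
  have := VFxy (@monoid.one G) (or_introl erefl).
  by rewrite Phi1.
have [Z D'Z /= Zxy] := cov (x, y) (conj Kx (ex_intro2 _ _ x Kx Axy)).
have : D Z by apply/set_mem; exact: sD'.
case=> [EZ|[g EZ]].
  by rewrite EZ in Zxy; exact: interior_subset.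
have EZc : Z = W (c Z) by apply: hc; exists g.
rewrite EZc in Zxy.
exfalso; apply: Zxy; apply: (VFxy (c Z)); right; exists Z => //.
Qed.
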